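(* Let $T$ be a rooted edge-weighted full binary tree with $n$ leaves, all root-to-leaf paths of weight $1$, every edge of weight at least $\tau\frac{\log n}{\sqrt{n}}$ for a sufficiently large constant $\tau$, whose topology is known, with experiment outcomes on all triples of leaves generated by the homogeneous noise model. Let $P=(v_0=r,v_1,\dots,v_{\ell^\ast})$ be the rightmost root-to-leaf path and $f$ the largest index such that $v_f$ is heavy. Then there is a procedure (Reconstruct-right-path) which, with high probability, computes $h_{v_\ell}$ up to additive error $\pm\Theta(\sqrt{\log n/n})$ for every $\ell\le f$.
   Context: Distances $d$ between leaves are path weights. For each unordered triple of distinct leaves a single experiment $Q(a,b,c)$ returns one pair, independently across triples, with $\Pr[Q(a,b,c)=(a,b)]=\frac{d(a,c)+d(b,c)}{2(d(a,b)+d(b,c)+d(a,c))}$ (and symmetrically). For a vertex $v$, $h_v$ is the weight of a path from $v$ to any leaf below it; $\mathsf{NL}(v)$ is the number of leaves in the subtree rooted at $v$. Children of each internal vertex are ordered so that the right child $\mathsf{rc}$ and left child $\mathsf{lc}$ satisfy $\mathsf{NL}(\mathsf{rc})\ge\mathsf{NL}(\mathsf{lc})$; the rightmost path starts at the root and always goes to the right child. A vertex $v$ is heavy if $\mathsf{NL}(v)\ge\alpha n+1$ with $\alpha=\frac16$. ''With high probability'' means probability $1-o(1)$ as $n\to\infty$. *)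

(* Defs.v *)
From HB Require Import structures.
From mathcomp Require Import all_boot all_order all_algebra.
From mathcomp Require Import all_classical all_reals all_analysis.
Set Implicit Arguments. Unset Strict Implicit. Unset Printing Implicit Defensive.
Import Order.TTheory GRing.Theory Num.Theory.
Local Open Scope ring_scope.

(* Tree topology (what the procedure is given): full binary tree, leaves labelled by nat.
   In [BNode l r], [l] is the left child and [r] the right child. *)
Inductive btree := BLeaf of nat | BNode of btree & btree.

(* Edge-weighted full binary tree: [WNode wl l wr r] has left child [l] reached by an
   edge of weight [wl] and right child [r] reached by an edge of weight [wr]. *)
Inductive wtree (R : Type) :=
  | WLeaf of nat
  | WNode of R & wtree R & R & wtree R.
Arguments WLeaf {R}.

Section Trees.
Variable R : realType.

Fixpoint topo (t : wtree R) : btree :=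
  match t with
  | WLeaf a => BLeaf a
  | WNode _ l _ r => BNode (topo l) (topo r)
  end.

Fixpoint leaves (t : wtree R) : seq nat :=
  match t with
  | WLeaf a => [:: a]
  | WNode _ l _ r => leaves l ++ leaves r
  end.

Definition NL (t : wtree R) : nat := size (leaves t).

Fixpoint rootdists (t : wtree R) : seq R :=
  match t with
  | WLeaf _ => [:: 0]
  | WNode wl l wr r => map (fun x => wl + x) (rootdists l) ++ map (fun x => wr + x) (rootdists r)
  end.

Fixpoint edges_ge (t : wtree R) (w0 : R) : bool :=
  match t with
  | WLeaf _ => true
  | WNode wl l wr r => [&& w0 <= wl, w0 <= wr, edges_ge l w0 & edges_ge r w0]
  end.

Fixpoint ordered (t : wtree R) : bool :=
  match t with
  | WLeaf _ => true
  | WNode _ l _ r => [&& (NL l <= NL r)%N, ordered l & ordered r]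
  end.

Fixpoint rd (t : wtree R) (a : nat) : R :=
  match t with
  | WLeaf _ => 0
  | WNode wl l wr r => if a \in leaves l then wl + rd l a else wr + rd r a
  end.

Fixpoint dist (t : wtree R) (a b : nat) : R :=
  match t with
  | WLeaf _ => 0
  | WNode _ l _ r =>
      if (a \in leaves l) && (b \in leaves l) then dist l a b
      else if (a \in leaves r) && (b \in leaves r) then dist r a b
      else rd t a + rd t b
  end.

(* h_v: weight of a path from v to a leaf below it (here: the first leaf;
   under the ultrametric hypothesis all such paths have the same weight) *)
Definition hv (t : wtree R) : R := head 0 (rootdists t).

(* the rightmost root-to-leaf path v_0 = root, v_1, ..., as a list of subtrees *)
Fixpoint rpath (t : wtree R) : seq (wtree R) :=
  match t with
  | WLeaf _ => [:: t]
  | WNode _ _ _ r => t :: rpath r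
  end.

Definition alpha_heavy : R := 1 / 6.

Definition heavy (n : nat) (v : wtree R) : bool := alpha_heavy * n%:R + 1 <= (NL v)%:R.

Definition fidx (n : nat) (t : wtree R) : nat :=
  \max_(i < size (rpath t) | heavy n (nth t (rpath t) i)) i.

Definition leaf_set_ok (n : nat) (t : wtree R) : Prop := perm_eq (leaves t) (iota 0 n).

End Trees.

(* unordered triples of distinct leaves, represented as a < b < c *)
Definition triple (n : nat) :=
  {x : 'I_n * 'I_n * 'I_n | (x.1.1 < x.1.2)%N && (x.1.2 < x.2)%N}.

(* outcome of experiment Q(a,b,c) (a<b<c): 0 = pair (a,b), 1 = pair (a,c), 2 = pair (b,c) *)
Definition outcomes (n : nat) := {ffun triple n -> 'I_3}.

Definition qprob (R : realType) (n : nat) (t : wtree R) (x : triple n) (k : 'I_3) : R :=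
  let a := val (val x).1.1 in let b := val (val x).1.2 in let c := val (val x).2 in
  let S := dist t a b + dist t b c + dist t a c in
  if val k == 0%N then (dist t a c + dist t b c) / (2 * S)
  else if val k == 1%N then (dist t a b + dist t b c) / (2 * S)
  else (dist t a b + dist t a c) / (2 * S).

(* probability (over independent outcomes of all triples) of an event E *)
Definition Prob (R : realType) (n : nat) (t : wtree R) (E : outcomes n -> bool) : R :=
  \sum_(o : outcomes n) (\prod_(x : triple n) qprob t x (o x)) * (E o)%:R.

(* Main.v *)
Require Import Defs.
From HB Require Import structures.
From mathcomp Require Import all_boot all_order all_algebra.
From mathcomp Require Import all_classical all_reals all_analysis.
From mathcomp Require Import ring lra zify.
Import Order.TTheory GRing.Theory Num.Theory.
Local Open Scope ring_scope.

Lemma expR_quad (R : realType) (y : R) : `|y| <= 1/2 -> expR y <= 1 + y + 2 * y^+2.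
Proof.
move=> hy.
have hy' : -(1/2) <= y <= 1/2 by rewrite -ler_norml.
case/andP: hy' => h1 h2.
have e0 : 0 < expR y by exact: expR_gt0.
have e1 : expR y * (1 - y) <= 1.
  have h := expR_ge1Dx (- y).
  have hh := expRxMexpNx_1 y.
  nra.
nra.
Qed.

Section Chern.
Variable R : realType.
Variable I : finType.
Variable q : I -> 'I_3 -> R.
Hypothesis Hq0 : forall x k, 0 <= q x k.
Hypothesis Hq1 : forall x, \sum_k q x k = 1.

Definition wgt (o : {ffun I -> 'I_3}) : R := \prod_x q x (o x).

Lemma wgt_ge0 o : 0 <= wgt o.
Proof. by apply: prodr_ge0 => x _. Qed.

Lemma expect_prod (F : I -> 'I_3 -> R) :
  \sum_(o : {ffun I -> 'I_3}) wgt o * \prod_x F x (o x) = \prod_x \sum_k q x k * F x k.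
Proof.
rewrite bigA_distr_bigA; apply: eq_bigr => o _.
by rewrite /wgt -big_split.
Qed.

Lemma wgt_total : \sum_(o : {ffun I -> 'I_3}) wgt o = 1.
Proof.
rewrite /wgt -(bigA_distr_bigA (fun x k => q x k)) /=.
by rewrite big1 // => x _; exact: Hq1.
Qed.

Lemma chernoff1 (S : pred I) (Y : I -> 'I_3 -> R)
  (HY : forall x k, `|Y x k| <= 1)
  (HE : forall x, S x -> \sum_k q x k * Y x k = 0) (t : R) :
  0 < t -> t <= 2 ->
  \sum_(o : {ffun I -> 'I_3}) wgt o * ((#|S|%:R * t <= \sum_(x | S x) Y x (o x))%R%:R)
   <= expR (- (#|S|%:R * t ^+ 2 / 8)).
Proof.
move=> t0 t2.
set m := #|S|%:R.
set lam := t / 4.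
have lam0 : 0 <= lam by rewrite /lam; lra.
have lam2 : lam <= 1/2 by rewrite /lam; lra.
pose F x k := if S x then expR (lam * Y x k) else 1.
have step1 : forall o : {ffun I -> 'I_3},
   wgt o * ((m * t <= \sum_(x | S x) Y x (o x))%R%:R)
   <= expR (- (lam * m * t)) * (wgt o * \prod_x F x (o x)).
  move=> o.
  rewrite mulrCA; apply: ler_wpM2l; first exact: wgt_ge0.
  have -> : \prod_x F x (o x) = expR (\sum_(x | S x) lam * Y x (o x)).
    by rewrite expR_sum -big_mkcond.
  rewrite -expRD.
  have [h|h] := boolP (m * t <= \sum_(x | S x) Y x (o x))%R; rewrite ?(negbTE h) /=; last exact: expR_ge0.
  apply: le_trans (expR_ge1Dx _); rewrite lerDl -mulr_sumr.
  have : 0 <= lam * (\sum_(x | S x) Y x (o x) - m * t).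
    by apply: mulr_ge0 => //; rewrite subr_ge0.
  by rewrite mulrBr mulrA; lra.
apply: le_trans (ler_sum _ (fun o _ => step1 o)) _.
rewrite -mulr_sumr expect_prod.
have step2 : forall x, 0 <= \sum_k q x k * F x k <= (if S x then expR (2 * lam ^+ 2) else 1).
  move=> x; rewrite /F; case Sx: (S x) => /=; last first.
    by under eq_bigr do rewrite mulr1; rewrite Hq1 lexx ler01.
  apply/andP; split.
    by apply: sumr_ge0 => k _; apply: mulr_ge0 => //; exact: expR_ge0.
  apply: le_trans (expR_ge1Dx _).
  apply: (@le_trans _ _ (\sum_k q x k * (1 + lam * Y x k + 2 * (lam * Y x k) ^+ 2))).
    apply: ler_sum => k _; apply: ler_wpM2l => //; apply: expR_quad.
    rewrite normrM (ger0_norm lam0).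
    have := HY x k; have := normr_ge0 (Y x k); nra.
  have -> : \sum_k q x k * (1 + lam * Y x k + 2 * (lam * Y x k) ^+ 2)
     = \sum_k q x k + lam * \sum_k q x k * Y x k + 2 * lam ^+ 2 * \sum_k q x k * Y x k ^+ 2.
    rewrite !mulr_sumr -!big_split /=; apply: eq_bigr => k _.
    by rewrite exprMn; ring.
  rewrite Hq1 HE // mulr0 addr0 lerD2l.
  rewrite -[leRHS]mulr1 ler_wpM2l //; first by apply: mulr_ge0 => //; apply: sqr_ge0.
  rewrite -(Hq1 x) ler_sum // => k _.
  rewrite -[leRHS]mulr1 ler_wpM2l //.
  have := HY x k; have := normr_ge0 (Y x k); rewrite -[Y x k ^+ 2]real_normK ?num_real //.
  nra.
apply: (@le_trans _ _ (expR (- (lam * m * t)) * \prod_x (if S x then expR (2 * lam ^+ 2) else 1))).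
  apply: ler_wpM2l; first exact: expR_ge0.
  by apply: ler_prod => x _; exact: step2.
rewrite -big_mkcond prodr_const -expRM_natl -expRD.
rewrite ler_expR /lam /m; lra.
Qed.

End Chern.

Set Implicit Arguments. Unset Strict Implicit.


Section TreeLemmas.
Variable R : realType.
Implicit Types t : wtree R.

Lemma rpath_inv (P : wtree R -> Prop) :
  (forall wl l wr r, P (WNode wl l wr r) -> P r) ->
  forall t d j, P d -> P t -> P (nth d (rpath t) j).
Proof.
move=> step; elim=> [a|wl l IHl wr r IHr] d j Pd Pt /=.
  by case: j => [|j] //=; rewrite nth_nil.
case: j => [|j] //=.
by apply: IHr => //; apply: step Pt.
Qed.

Lemma rd_const t c a : all (fun x => x == c) (rootdists t) -> a \in leaves t -> rd t a = c.
Proof.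
elim: t c => [b|wl l IHl wr r IHr] c /=.
  by rewrite andbT => /eqP -> .
rewrite all_cat !all_map => /andP [hl hr].
rewrite mem_cat; case: ifP => ha /= H.
  rewrite (IHl (c - wl)) //; first lra.
  by apply/allP => x hx; have := allP hl x hx => /= /eqP <-; rewrite addrC addKr.
have hb := H.
rewrite (IHr (c - wr)) //; first lra.
by apply/allP => x hx; have := allP hr x hx => /= /eqP <-; rewrite addrC addKr.
Qed.

Lemma leaves_nil t : leaves t != [::].
Proof. by elim: t => //= wl l IHl wr r IHr; case: (leaves l) IHl. Qed.

Lemma rootdists_size t : size (rootdists t) = size (leaves t).
Proof. by elim: t => //= wl l IHl wr r IHr; rewrite !size_cat !size_map IHl IHr. Qed.

Lemma hv_const t c : all (fun x => x == c) (rootdists t) -> hv t = c.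
Proof.
rewrite /hv; have := rootdists_size t; have := leaves_nil t.
case: (rootdists t) => [|x s] /=; first by case: (leaves t).
by move=> _ _ /andP [/eqP].
Qed.

Lemma rd_ge0 [t w0 a] : 0 <= w0 -> edges_ge t w0 -> 0 <= rd t a.
Proof.
move=> w00; elim: t => //= wl l IHl wr r IHr /and4P [h1 h2 h3 h4].
case: ifP => _; apply: addr_ge0; by [apply: le_trans h1|apply: le_trans h2|auto].
Qed.

Lemma rd_gt0 [t w0 a] : 0 < w0 -> edges_ge t w0 -> (exists wl l wr r, t = WNode wl l wr r) -> 0 < rd t a.
Proof.
move=> w00 He [wl [l [wr [r Et]]]]; subst t; move: He => /= /and4P [h1 h2 h3 h4] /=.
case: ifP => _.
  by apply: ltr_pwDl; [apply: lt_le_trans h1|apply: rd_ge0 h3; exact: ltW].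
by apply: ltr_pwDl; [apply: lt_le_trans h2|apply: rd_ge0 h4; exact: ltW].
Qed.

Lemma dist_ge0 [t w0] a b : 0 <= w0 -> edges_ge t w0 -> 0 <= dist t a b.
Proof.
move=> w00; elim: t => //= wl l IHl wr r IHr He.
move: (He) => /and4P [h1 h2 h3 h4].
case: ifP => _; first exact: IHl.
case: ifP => _; first exact: IHr.
by apply: addr_ge0; [apply: (rd_ge0 (t := WNode wl l wr r) w00 He)|apply: (rd_ge0 (t := WNode wl l wr r) w00 He)].
Qed.

Lemma dist_gt0 [t w0 a b] : 0 < w0 -> edges_ge t w0 -> uniq (leaves t) ->
  a \in leaves t -> b \in leaves t -> a != b -> 0 < dist t a b.
Proof.
move=> w00; elim: t => [c|wl l IHl wr r IHr] He.
  by move=> _; rewrite !inE => /eqP -> /eqP ->; rewrite eqxx.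
move: (He) => /= /and4P [h1 h2 h3 h4].
rewrite cat_uniq => /and3P [ul dis ur].
rewrite !mem_cat => ha hb hab.
case: ifP => [/andP [al bl]|_]; first exact: IHl.
case: ifP => [/andP [ar br]|_]; first exact: IHr.
apply: ltr_pwDl; last by apply: rd_ge0 He; exact: ltW.
by apply: rd_gt0 He _ => //; do 4 eexists.
Qed.

Lemma rpath_drop t j : (j < size (rpath t))%N -> drop j (rpath t) = rpath (nth t (rpath t) j).
Proof.
elim: t j => [a|wl l IHl wr r IHr] [|j] //=.
move=> hj; rewrite IHr //; congr rpath; exact: set_nth_default.
Qed.

Lemma NL_node (wl wr : R) (l r : wtree R) : NL (WNode wl l wr r) = (NL l + NL r)%N.
Proof. by rewrite /NL /= size_cat. Qed.

Lemma NL_pos t : (0 < NL t)%N.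
Proof. by rewrite /NL lt0n size_eq0 leaves_nil. Qed.

Lemma NL_rpath t j : (NL (nth t (rpath t) j) <= NL t)%N.
Proof.
elim: t j => [a|wl l IHl wr r IHr] [|j] //=; first by case: j.
case: (ltnP j (size (rpath r))) => hj.
  rewrite (set_nth_default r) //; apply: leq_trans (IHr j) _.
  by rewrite NL_node leq_addl.
by rewrite nth_default.
Qed.

Lemma size_rpath t : (size (rpath t) <= NL t)%N.
Proof.
elim: t => [a|wl l IHl wr r IHr] //=.
rewrite NL_node; have := NL_pos l; lia.
Qed.

Lemma NL_rpath_mono t i j : (i <= j)%N -> (j < size (rpath t))%N ->
  (NL (nth t (rpath t) j) <= NL (nth t (rpath t) i))%N.
Proof.
move=> hij hj.
have hi : (i < size (rpath t))%N by apply: leq_ltn_trans hj.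
have -> : nth t (rpath t) j = nth t (drop i (rpath t)) (j - i).
  by rewrite nth_drop subnKC.
rewrite rpath_drop //.
rewrite (set_nth_default (nth t (rpath t) i)); first exact: NL_rpath.
by rewrite -rpath_drop // size_drop; lia.
Qed.

Lemma leaves_rpath t j : {subset leaves (nth t (rpath t) j) <= leaves t}.
Proof.
apply: (rpath_inv (P := fun v => {subset leaves v <= leaves t})).
- move=> wl l wr r H x hx; apply: H; rewrite /= mem_cat hx orbT //.
- by [].
- by [].
Qed.

End TreeLemmas.


Lemma uniq_catl [T : eqType] [s1 s2 : seq T] [x] : uniq (s1 ++ s2) -> x \in s2 -> x \notin s1.
Proof.
rewrite cat_uniq => /and3P [_ /hasPn H _] h.
exact: H.
Qed.

Lemma uniq_catr [T : eqType] [s1 s2 : seq T] [x] : uniq (s1 ++ s2) -> x \in s1 -> x \notin s2.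
Proof.
move=> u h; apply/negP => h2; have := uniq_catl (T:=T) u h2; by rewrite h.
Qed.

Section Spine.
Variable R : realType.

Definition spinv (w0 c : R) (t : wtree R) : Prop :=
  [/\ uniq (leaves t), edges_ge t w0, ordered t &
     exists c', all (fun x => x == c') (rootdists t) /\ c' <= c].

Lemma spinv_nth w0 c (T : wtree R) j : 0 <= w0 -> spinv w0 c T -> spinv w0 c (nth T (rpath T) j).
Proof.
move=> w00 HT; apply: rpath_inv => //.
move=> wl l wr r [/= u /and4P [h1 h2 h3 h4] /and3P [_ o1 o2] [c' [hc hc']]].
have u' : uniq (leaves r) by move: u; rewrite cat_uniq => /and3P [].
have w0r : 0 <= wr by apply: le_trans h2.
split => //.
exists (c' - wr); split; last by lra.
move: hc; rewrite /= all_cat => /andP [_]; rewrite all_map => /allP H.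
by apply/allP => x hx; have := H x hx => /= /eqP <-; rewrite addrC addKr.
Qed.

Lemma dist_node (wl wr : R) l r a b : dist (WNode wl l wr r) a b =
  if (a \in leaves l) && (b \in leaves l) then dist l a b
  else if (a \in leaves r) && (b \in leaves r) then dist r a b
  else rd (WNode wl l wr r) a + rd (WNode wl l wr r) b.
Proof. by []. Qed.

Lemma rd_hv (t : wtree R) c a : all (fun x => x == c) (rootdists t) -> a \in leaves t -> rd t a = hv t.
Proof. by move=> h ha; rewrite (rd_const h ha) (hv_const h). Qed.

Lemma dist_spine (T : wtree R) c j a b wl' lv wr' rv :
  uniq (leaves T) -> all (fun x => x == c) (rootdists T) -> (j < size (rpath T))%N ->
  nth T (rpath T) j = WNode wl' lv wr' rv ->
  ((a \in leaves lv) && (b \in leaves rv)) || ((a \in leaves rv) && (b \in leaves lv)) ->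
  dist T a b = 2 * hv (nth T (rpath T) j).
Proof.
elim: T c j => [x|wl l IHl wr r IHr] c j u hc hj.
  by case: j hj => //.
case: j hj => [|j] hj.
  rewrite [nth _ _ 0]/= => E; rewrite E in u hc *; rewrite dist_node => H.
  have [ha hb] : a \in leaves (WNode wl' lv wr' rv) /\ b \in leaves (WNode wl' lv wr' rv).
    by case/orP: H => /andP [ha hb]; rewrite /= !mem_cat ha hb ?orbT.
  rewrite (rd_hv hc ha) (rd_hv hc hb).
  set hh := hv _.
  case/orP: H => /andP [ha' hb'].
  - rewrite (negbTE (uniq_catl u hb')) andbF (negbTE (uniq_catr u ha')) /=.
    lra.
  - rewrite (negbTE (uniq_catl u ha')) /= (negbTE (uniq_catr u hb')) andbF /=.
    lra.
move: hj; rewrite /= ltnS => hj.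
rewrite (set_nth_default r) // => hv' H.
have sub := leaves_rpath (t := r) (j := j); rewrite hv' in sub.
have [ha hb] : a \in leaves r /\ b \in leaves r.
  by case/orP: H => /andP [ha hb]; split; apply: sub; rewrite /= mem_cat ?ha ?hb ?orbT.
rewrite (negbTE (uniq_catl u ha)) /= ha hb /=.
apply: (IHr (c - wr)) => //.
- by move: u; rewrite cat_uniq => /and3P [].
- move: hc; rewrite /= all_cat => /andP [_]; rewrite all_map => /allP HH.
  by apply/allP => x hx; have := HH x hx => /= /eqP <-; rewrite addrC addKr.
Qed.

Lemma dist_root (wl wr : R) (L Rt : wtree R) (c a : nat) :
  uniq (leaves (WNode wl L wr Rt)) -> all (fun x => x == 1) (rootdists (WNode wl L wr Rt)) ->
  c \in leaves L -> a \in leaves Rt ->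
  dist (WNode wl L wr Rt) c a = 2 /\ dist (WNode wl L wr Rt) a c = 2.
Proof.
move=> u h hc ha.
have hcT : c \in leaves (WNode wl L wr Rt) by rewrite /= mem_cat hc.
have haT : a \in leaves (WNode wl L wr Rt) by rewrite /= mem_cat ha orbT.
rewrite !dist_node (rd_const h hcT) (rd_const h haT).
rewrite (negbTE (uniq_catl u ha)) (negbTE (uniq_catr u hc)) /= andbF /=.
rewrite andbF; split; lra.
Qed.

End Spine.


Definition elems n (x : triple n) : seq nat := [:: val (val x).1.1; val (val x).1.2; val (val x).2].

Definition SelG n (cl : nat -> nat) (x : triple n) : bool := perm_eq (map cl (elems x)) [:: 0; 1; 2]%N.

Lemma exists_triple n u v w : (u < n)%N -> (v < n)%N -> (w < n)%N -> uniq [:: u; v; w] ->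
  exists x : triple n, perm_eq (elems x) [:: u; v; w].
Proof.
move=> hu hv hw U.
have ps : perm_eq (sort leq [:: u; v; w]) [:: u; v; w] by rewrite perm_sort.
have ss : sorted leq (sort leq [:: u; v; w]) := sort_sorted leq_total _.
have us : uniq (sort leq [:: u; v; w]) by rewrite (perm_uniq ps).
have sz : size (sort leq [:: u; v; w]) = 3%N by rewrite size_sort.
have ms : forall z, z \in sort leq [:: u; v; w] -> (z < n)%N.
  by move=> z; rewrite (perm_mem ps) !inE => /or3P [] /eqP ->.
move: ps ss us sz ms; case: (sort leq [:: u; v; w]) => [|a [|b [|c [|d s']]]] //= ps ss us _ ms.
have ha : (a < n)%N by apply: ms; rewrite inE eqxx.
have hb : (b < n)%N by apply: ms; rewrite !inE eqxx orbT.
have hc : (c < n)%N by apply: ms; rewrite !inE eqxx !orbT.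
move: ss us; rewrite /= !inE andbT => /andP [hab hbc] /and3P [/norP [nab nac] nbc _].
have pf : ((Ordinal ha : nat) < Ordinal hb)%N && ((Ordinal hb : nat) < Ordinal hc)%N.
  by rewrite /=; apply/andP; split; rewrite ltn_neqAle ?hab ?hbc ?andbT.
by exists (exist (fun x : 'I_n * 'I_n * 'I_n => (x.1.1 < x.1.2)%N && (x.1.2 < x.2)%N) ((Ordinal ha, Ordinal hb), Ordinal hc) pf).
Qed.

Lemma card_SelG n (cl : nat -> nat) c0 a0 (B : seq nat) :
  cl c0 = 0%N -> cl a0 = 1%N -> (c0 < n)%N -> (a0 < n)%N -> uniq B ->
  (forall b, b \in B -> cl b = 2%N /\ (b < n)%N) ->
  (size B <= #|@SelG n cl|)%N.
Proof.
move=> h0 h1 c0n a0n uB HB.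
pose g (x : triple n) := head 0%N [seq e <- elems x | cl e == 2%N].
rewrite cardE -(size_map g).
apply: uniq_leq_size => // b hb.
have [cb bn] := HB b hb.
have U : uniq [:: c0; a0; b].
  have d1 : c0 != a0 by apply/eqP => E; move: h0; rewrite E h1.
  have d2 : c0 != b by apply/eqP => E; move: h0; rewrite E cb.
  have d3 : a0 != b by apply/eqP => E; move: h1; rewrite E cb.
  by rewrite /= !inE negb_or d1 d2 d3.
have [x px] := exists_triple c0n a0n bn U.
apply/mapP; exists x.
  by rewrite mem_enum; apply: (perm_trans (perm_map cl px)); rewrite /= h0 h1 cb.
rewrite /g.
have := perm_filter (fun e => cl e == 2%N) px.
move: [seq e <- elems x | cl e == 2%N] => s.
rewrite /= h0 h1 cb /=.
case: s => [|z [|z' s']] P.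
- by have := perm_size P.
- by have := perm_mem P z; rewrite !inE eqxx => /esym /eqP.
- by have := perm_size P.
Qed.

Definition Dc (R : realType) (h : R) (i j : nat) : R := if (i == 0%N) || (j == 0%N) then 2 else 2 * h.

Lemma Ecalc (R : realType) (h : R) (ca cb cc : nat) : 0 <= h ->
  perm_eq [:: ca; cb; cc] [:: 0; 1; 2]%N ->
  let S := Dc h ca cb + Dc h cb cc + Dc h ca cc in
  (Dc h ca cc + Dc h cb cc) / (2 * S) * (cc == 0%N)%:R
  + (Dc h ca cb + Dc h cb cc) / (2 * S) * (cb == 0%N)%:R
  + (Dc h ca cb + Dc h ca cc) / (2 * S) * (ca == 0%N)%:R = 1 / (h + 2).
Proof.
move=> h0 P S; rewrite /S; clear S.
have h2 : h + 2 != 0 by rewrite gt_eqF //; lra.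
have h4 : 2 * (2 * h + 2 + 2) != 0 by rewrite gt_eqF //; lra.
have h4' : 2 * (2 + 2 * h + 2) != 0 by rewrite gt_eqF //; lra.
have h4'' : 2 * (2 + 2 + 2 * h) != 0 by rewrite gt_eqF //; lra.
have m : forall z, z \in [:: ca; cb; cc] -> (z < 3)%N.
  by move=> z; rewrite (perm_mem P) !inE => /or3P [] /eqP ->.
have := m ca; have := m cb; have := m cc; rewrite !inE !eqxx !orbT.
move=> /(_ isT) hc /(_ isT) hb /(_ isT) ha.
move: P; clear m.
case: ca ha => [|[|[|ca]]] // _; case: cb hb => [|[|[|cb]]] // _; case: cc hc => [|[|[|cc]]] // _ P.
all: rewrite /Dc /=.
all: field.
all: try done.
all: rewrite h2 /=; rewrite gt_eqF //; lra.
Qed.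


Fixpoint bleaves (b : btree) : seq nat :=
  match b with BLeaf a => [:: a] | BNode l r => bleaves l ++ bleaves r end.
Fixpoint brpath (b : btree) : seq btree :=
  match b with BLeaf _ => [:: b] | BNode _ r => b :: brpath r end.
Definition blc (b : btree) := match b with BLeaf _ => b | BNode l _ => l end.
Definition brc (b : btree) := match b with BLeaf _ => b | BNode _ r => r end.

Definition cls (bt : btree) (l : nat) (a : nat) : nat :=
  let v := nth bt (brpath bt) l in
  if a \in bleaves (blc bt) then 0%N
  else if a \in bleaves (blc v) then 1%N
  else if a \in bleaves (brc v) then 2%N else 3%N.

Definition Sel n bt l := @SelG n (cls bt l).
Arguments Sel : clear implicits.

Definition excl n (x : triple n) (k : 'I_3) : nat :=
  if val k == 0%N then val (val x).2 else if val k == 1%N then val (val x).1.2 else val (val x).1.1.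

Definition Xi n bt l (x : triple n) (k : 'I_3) : bool := cls bt l (excl x k) == 0%N.

Definition phat (R : realType) n bt (o : outcomes n) l : R :=
  (\sum_(x | Sel n bt l x) ((Xi bt l x (o x))%:R : R)) / (#|Sel n bt l|%:R).
Arguments phat : clear implicits.

Definition Aest (R : realType) n bt (o : outcomes n) (l : nat) : R :=
  if l == 0%N then 1 else (phat R n bt o l)^-1 - 2.
Arguments Aest : clear implicits.

Lemma bleaves_topo (R : realType) (t : wtree R) : bleaves (topo t) = leaves t.
Proof. by elim: t => //= wl l -> wr r ->. Qed.

Lemma brpath_topo (R : realType) (t : wtree R) : brpath (topo t) = map (@topo R) (rpath t).
Proof. by elim: t => //= wl l _ wr r ->. Qed.

Section Cls.
Variable R : realType.

Lemma cls_val (wl wr wl' wr' : R) L Rt lv rv l a :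
  let T := WNode wl L wr Rt in
  (l < size (rpath T))%N -> nth T (rpath T) l = WNode wl' lv wr' rv ->
  cls (topo T) l a = if a \in leaves L then 0%N else if a \in leaves lv then 1%N
                     else if a \in leaves rv then 2%N else 3%N.
Proof.
move=> T hl E.
rewrite /cls brpath_topo (nth_map T) // E /=.
by rewrite !bleaves_topo.
Qed.

Lemma dist_cls (wl wr wl' wr' : R) L Rt lv rv l u w :
  let T := WNode wl L wr Rt in
  uniq (leaves T) -> all (fun x => x == 1) (rootdists T) ->
  (0 < l)%N -> (l < size (rpath T))%N -> nth T (rpath T) l = WNode wl' lv wr' rv ->
  (cls (topo T) l u < 3)%N -> (cls (topo T) l w < 3)%N -> cls (topo T) l u != cls (topo T) l w ->
  dist T u w = Dc (hv (nth T (rpath T) l)) (cls (topo T) l u) (cls (topo T) l w).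
Proof.
move=> T u0 h1 l0 hl E.
have subv : {subset leaves (WNode wl' lv wr' rv) <= leaves Rt}.
  case: l l0 hl E => [|l] // _ hl E; rewrite -E.
  rewrite [rpath T]/= [nth _ _ l.+1]/= (set_nth_default Rt); first exact: leaves_rpath.
  by move: hl; rewrite /= ltnS.
have sl : forall z, z \in leaves lv -> z \in leaves Rt by move=> z hz; apply: subv; rewrite /= mem_cat hz.
have sr : forall z, z \in leaves rv -> z \in leaves Rt by move=> z hz; apply: subv; rewrite /= mem_cat hz orbT.
have cases : forall z, (cls (topo T) l z < 3)%N ->
   [\/ cls (topo T) l z = 0%N /\ z \in leaves L, cls (topo T) l z = 1%N /\ z \in leaves lv
     | cls (topo T) l z = 2%N /\ z \in leaves rv].
  move=> z; rewrite (cls_val _ hl E).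
  case: ifP => h0; first by move=> _; constructor 1.
  case: ifP => h1'; first by move=> _; constructor 2.
  by case: ifP => h2 // _; constructor 3.
move=> cu cw.
case: (cases u cu) => -[-> hu]; case: (cases w cw) => -[-> hw] // _.
- by have [-> _] := dist_root u0 h1 hu (sl _ hw); rewrite /Dc /=.
- by have [-> _] := dist_root u0 h1 hu (sr _ hw); rewrite /Dc /=.
- by have [_ ->] := dist_root u0 h1 hw (sl _ hu); rewrite /Dc /=.
- by rewrite /Dc [(1 == 0)%N || _]/=; apply: (dist_spine u0 h1 hl E); rewrite hu hw.
- by have [_ ->] := dist_root u0 h1 hw (sr _ hu); rewrite /Dc /=.
- by rewrite /Dc [(2 == 0)%N || _]/=; apply: (dist_spine u0 h1 hl E); rewrite hu hw orbT.
Qed.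


Lemma sum3 (F : 'I_3 -> R) : \sum_k F k = F ord0 + F (lift ord0 ord0) + F (lift ord0 (lift ord0 ord0)).
Proof. by rewrite !big_ord_recl big_ord0 addr0 addrA. Qed.

Lemma qprob_props n (T : wtree R) w0 : 0 < w0 -> leaf_set_ok n T -> edges_ge T w0 ->
  (forall (x : triple n) k, 0 <= qprob T x k) /\ (forall x : triple n, \sum_k qprob T x k = 1).
Proof.
move=> w00 lok He.
have u : uniq (leaves T) by rewrite (perm_uniq lok) iota_uniq.
have mem : forall z : 'I_n, (val z) \in leaves T by move=> z; rewrite (perm_mem lok) mem_iota /= ltn_ord.
have d0 : forall a b, 0 <= dist T a b by move=> a b; apply: dist_ge0 He; exact: ltW.
split.
  move=> x k; rewrite /qprob /=.
  have g : forall p q r : R, 0 <= p -> 0 <= q -> 0 <= r -> 0 <= (p + q) / (2 * r).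
    by move=> p q r hp hq hr; apply: divr_ge0; [exact: addr_ge0|apply: mulr_ge0].
  by case: ifP => _; [|case: ifP => _]; apply: g; rewrite ?addr_ge0 ?d0.
move=> x; rewrite sum3 /qprob /=.
case: x => [[[a b] c] /= /andP [hab hbc]].
have pab : 0 < dist T a b.
  apply: dist_gt0 He u (mem a) (mem b) _ => //.
  by rewrite neq_ltn hab.
have S0 : dist T a b + dist T b c + dist T a c != 0.
  by rewrite gt_eqF //; have := d0 b c; have := d0 a c; lra.
field.
exact: S0.
Qed.

Lemma Emean n (wl wr wl' wr' : R) L Rt lv rv l (x : triple n) :
  let T := WNode wl L wr Rt in
  uniq (leaves T) -> all (fun x => x == 1) (rootdists T) ->
  (0 < l)%N -> (l < size (rpath T))%N -> nth T (rpath T) l = WNode wl' lv wr' rv ->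
  0 <= hv (nth T (rpath T) l) ->
  Sel n (topo T) l x ->
  \sum_k qprob T x k * (Xi (topo T) l x k)%:R = 1 / (hv (nth T (rpath T) l) + 2).
Proof.
move=> T u h1 l0 hl E hv0 Sx.
have HD : forall uu ww, (cls (topo T) l uu < 3)%N -> (cls (topo T) l ww < 3)%N ->
    cls (topo T) l uu != cls (topo T) l ww ->
    dist T uu ww = Dc (hv (nth T (rpath T) l)) (cls (topo T) l uu) (cls (topo T) l ww).
  by move=> uu ww; apply: (dist_cls u h1 l0 hl E).
move: Sx HD hv0; rewrite /Sel /SelG /Xi.
move: (cls (topo T) l) (hv (nth T (rpath T) l)) => cl h.
clearbody T => P HD hv0.
rewrite sum3 /qprob /excl /=.
case: x P => [[[a b] c] pf] /=.
rewrite /elems /= => P.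
have m : forall z, z \in [:: cl a; cl b; cl c] -> (z < 3)%N.
  by move=> z; rewrite (perm_mem P) !inE => /or3P [] /eqP ->.
have ca : (cl a < 3)%N by apply: m; rewrite !inE eqxx.
have cb : (cl b < 3)%N by apply: m; rewrite !inE eqxx orbT.
have cc : (cl c < 3)%N by apply: m; rewrite !inE eqxx !orbT.
have U : uniq [:: cl a; cl b; cl c] by rewrite (perm_uniq P).
move: U; rewrite /= !inE andbT => /andP [/norP [nab nac] nbc].
rewrite !HD //.
have := Ecalc hv0 P.
by rewrite /= => <-.
Qed.

End Cls.


Lemma inv_close (R : realType) (ph p h t : R) : p * (h + 2) = 1 -> 0 <= h -> h <= 1 ->
  `|ph - p| < t -> t <= 1/6 -> `|ph^-1 - 2 - h| <= 18 * t.
Proof.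
move=> hp h0 h1 ht t6.
have p3 : 1/3 <= p by nra.
have hph : 1/6 <= ph.
  have := ht; rewrite ltr_norml => /andP [a b]; lra.
have ph0 : ph != 0 by rewrite gt_eqF //; lra.
set a := ph^-1.
have ha : ph * a = 1 by rewrite /a mulfV.
have a0 : 0 < a by rewrite /a invr_gt0; lra.
have a6 : a <= 6 by nra.
have -> : a - 2 - h = a * (h + 2) * (p - ph).
  have : a * (h + 2) * (p - ph) = a * (p * (h + 2)) - (ph * a) * (h + 2) by ring.
  by rewrite hp ha => ->; ring.
rewrite normrM [`|p - ph|]distrC.
have n1 : `|a * (h + 2)| <= 18.
  rewrite ger0_norm; [nra | apply: mulr_ge0; lra].
have := normr_ge0 (ph - p); have := normr_ge0 (a * (h + 2)); nra.
Qed.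

Lemma ln_le_sqrt (R : realType) (x : R) : 1 <= x -> ln x <= 2 * Num.sqrt x.
Proof.
move=> x1.
have s0 : 0 < Num.sqrt x by rewrite sqrtr_gt0; lra.
have -> : x = Num.sqrt x ^+ 2 by rewrite sqr_sqrtr //; lra.
rewrite lnXn // sqrtr_sqr ger0_norm; last exact: ltW.
have e : 1 + (Num.sqrt x - 1) = Num.sqrt x by ring.
have := @le_ln1Dx R (Num.sqrt x - 1); rewrite e => h.
rewrite mulr2n; have := h ltac:(lra); lra.
Qed.

Lemma twice_le (R : realType) (a b : R) : a <= b -> a *+ 2 <= 2 * b.
Proof. by move=> h; rewrite mulr2n; lra. Qed.

Section Main.
Variable R : realType.
Variables (n : nat) (wl wr : R) (L Rt : wtree R) (w0 t : R).
Hypothesis lok : leaf_set_ok n (WNode wl L wr Rt).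
Hypothesis ordT : ordered (WNode wl L wr Rt).
Hypothesis rdT : all (fun x => x == 1) (rootdists (WNode wl L wr Rt)).
Hypothesis w0pos : 0 < w0.
Hypothesis edT : edges_ge (WNode wl L wr Rt) w0.

Local Notation T := (WNode wl L wr Rt).
Local Notation v l := (nth T (rpath T) l).

Lemma uT : uniq (leaves T).
Proof. by rewrite (perm_uniq lok) iota_uniq. Qed.

Lemma memT a : (a \in leaves T) = (a < n)%N.
Proof. by rewrite (perm_mem lok) mem_iota. Qed.

Lemma sizeT : size (rpath T) = (size (rpath T))%N.
Proof. by []. Qed.

Lemma size_rpath_n : (size (rpath T) <= n)%N.
Proof.
apply: leq_trans (size_rpath T) _.
by rewrite /NL (perm_size lok) size_iota.
Qed.

Lemma sub_Rt l : (0 < l)%N -> (l < size (rpath T))%N -> {subset leaves (v l) <= leaves Rt}.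
Proof.
case: l => [|l] // _ hl.
rewrite [rpath T]/= [nth _ _ l.+1]/= (set_nth_default Rt); first exact: leaves_rpath.
by move: hl; rewrite /= ltnS.
Qed.

Lemma spine l : spinv w0 1 (v l).
Proof.
apply: spinv_nth; first exact: ltW.
split => //; first exact: uT.
by exists 1; split.
Qed.

Lemma hv_bounds l : 0 <= hv (v l) <= 1.
Proof.
have [_ e _ [c' [hc c1]]] := spine l.
rewrite (hv_const hc) c1 andbT.
have := leaves_nil (v l); case E: (leaves (v l)) => [|a s] // _.
rewrite -(rd_const hc (a := a)); last by rewrite E inE eqxx.
apply: rd_ge0 e; exact: ltW.
Qed.

Lemma heavy_node l : (0 < l)%N -> (l <= fidx n T)%N -> (l < size (rpath T))%N ->
  exists wl' lv wr' rv, v l = WNode wl' lv wr' rv /\ n%:R / 12 <= (NL rv)%:R :> R.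
Proof.
move=> l0 lf hl.
have [i hi li] : exists2 i : 'I_(size (rpath T)), heavy n (v i) & (l <= i)%N.
  apply/exists_inP; apply: contraT => /exists_inPn H.
  have : (fidx n T <= l.-1)%N.
    apply/bigmax_leqP => i hi; have := H i hi; rewrite -ltnNge; lia.
  lia.
have hNL : (NL (v i) <= NL (v l))%N by apply: NL_rpath_mono.
move: hi; rewrite /heavy /alpha_heavy => hi.
have hNLr : n%:R / 6 + 1 <= (NL (v l))%:R :> R.
  apply: le_trans (_ : (NL (v i))%:R <= _); first by lra.
  by rewrite ler_nat.
have [_ _ ov _] := spine l.
case E: (v l) hNLr ov => [a|wl' lv wr' rv].
  rewrite /NL /= => h _; have : (1 <= n)%N.
    by rewrite -(size_iota 0 n) -(perm_size lok) lt0n size_eq0 leaves_nil.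
  rewrite -(ler_nat R); lra.
rewrite NL_node natrD /= => h; case/and3P => o _ _.
exists wl', lv, wr', rv; split => //.
have : (NL lv)%:R <= (NL rv)%:R :> R by rewrite ler_nat.
lra.
Qed.


Lemma m_bound l : (0 < l)%N -> (l <= fidx n T)%N -> (l < size (rpath T))%N ->
  n%:R / 12 <= #|Sel n (topo T) l|%:R :> R.
Proof.
move=> l0 lf hl.
have [wl' [lv [wr' [rv [E hrv]]]]] := heavy_node l0 lf hl.
apply: le_trans hrv _; rewrite ler_nat.
have sub := sub_Rt l0 hl; rewrite E in sub.
have [uv _ _ _] := spine l; rewrite E /= in uv.
have nL : forall z, z \in leaves Rt -> z \notin leaves L.
  by move=> z hz; apply: (uniq_catl uT).
have cv := fun z => @cls_val R wl wr wl' wr' L Rt lv rv l z hl E.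
have hlv := leaves_nil lv; have hL := leaves_nil L.
case EL: (leaves L) hL => [|c0 sL] // _.
case Elv: (leaves lv) hlv => [|a0 slv] // _.
have c0L : c0 \in leaves L by rewrite EL inE eqxx.
have a0lv : a0 \in leaves lv by rewrite Elv inE eqxx.
have a0R : a0 \in leaves Rt by apply: sub; rewrite /= mem_cat a0lv.
apply: (@card_SelG n (cls (topo T) l) c0 a0).
- by rewrite cv c0L.
- by rewrite cv (negbTE (nL _ a0R)) a0lv.
- by rewrite -memT /= mem_cat c0L.
- by rewrite -memT /= mem_cat a0R orbT.
- by move: uv; rewrite cat_uniq => /and3P [].
- move=> b hb.
  have bR : b \in leaves Rt by apply: sub; rewrite /= mem_cat hb orbT.
  split; last by rewrite -memT /= mem_cat bR orbT.
  by rewrite cv (negbTE (nL _ bR)) (negbTE (uniq_catl uv hb)) hb.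
Qed.


Definition pl l : R := 1 / (hv (v l) + 2).
Definition Yl l (x : triple n) (k : 'I_3) : R := (Xi (topo T) l x k)%:R - pl l.
Definition Bad l (o : outcomes n) : bool :=
  (#|Sel n (topo T) l|%:R * t <= \sum_(x | Sel n (topo T) l x) Yl l x (o x)) ||
  (#|Sel n (topo T) l|%:R * t <= \sum_(x | Sel n (topo T) l x) (- Yl l x (o x))).

Lemma n_pos : (1 <= n)%N.
Proof. by rewrite -(size_iota 0 n) -(perm_size lok) lt0n size_eq0 leaves_nil. Qed.

Lemma sumY l (o : outcomes n) : \sum_(x | Sel n (topo T) l x) Yl l x (o x) =
  \sum_(x | Sel n (topo T) l x) ((Xi (topo T) l x (o x))%:R : R) - #|Sel n (topo T) l|%:R * pl l.
Proof.
rewrite /Yl big_split /= sumrN; congr (_ - _).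
by rewrite sumr_const mulr_natl.
Qed.

Lemma close l (o : outcomes n) : (0 < l)%N -> (l <= fidx n T)%N -> (l < size (rpath T))%N ->
  t <= 1/6 -> ~~ Bad l o ->
  `|Aest R n (topo T) o l - hv (v l)| <= 18 * t.
Proof.
move=> l0 lf hl t6; rewrite /Bad negb_or -!ltNge => /andP [b1 b2].
have mb := m_bound l0 lf hl.
have n1 : 1 <= n%:R :> R by rewrite ler1n n_pos.
set m := #|Sel n (topo T) l|%:R in mb b1 b2 *.
have m0 : 0 < m by lra.
rewrite /Aest; case: eqP => [E|_]; first by rewrite E in l0.
have [h0 h1] : 0 <= hv (v l) /\ hv (v l) <= 1 by apply/andP; exact: hv_bounds.
apply: (@inv_close _ _ (pl l)) => //.
- by rewrite /pl mul1r mulVf // gt_eqF //; lra.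
- rewrite sumrN sumY in b2; rewrite sumY in b1.
  rewrite /phat -/m.
  set SX := \sum_(x | _) _ in b1 b2 *.
  have -> : SX / m - pl l = (SX - m * pl l) / m by field; rewrite gt_eqF.
  rewrite -/m in b1 b2.
  rewrite normrM normfV (gtr0_norm m0) ltr_pdivrMr // ltr_norml; apply/andP; split; lra.
Qed.


Lemma bad_prob l : (0 < l)%N -> (l <= fidx n T)%N -> (l < size (rpath T))%N ->
  0 < t -> t <= 2 ->
  Prob T (Bad l) <= 2 * expR (- (n%:R / 12 * t ^+ 2 / 8)).
Proof.
move=> l0 lf hl t0 t2.
have mb := m_bound l0 lf hl.
have ee : expR (- (#|Sel n (topo T) l|%:R * t ^+ 2 / 8)) <= expR (- (n%:R / 12 * t ^+ 2 / 8)).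
  rewrite ler_expR; have tt : 0 <= t ^+ 2 by apply: sqr_ge0.
  nra.
have [qp0 qp1] := qprob_props w0pos lok edT.
have [wl' [lv [wr' [rv [E _]]]]] := heavy_node l0 lf hl.
have /andP [h0 h1] := hv_bounds l.
have HEm : forall x, Sel n (topo T) l x -> \sum_k qprob T x k * (Xi (topo T) l x k)%:R = pl l.
  by move=> x sx; rewrite /pl; apply: (Emean uT rdT l0 hl E h0).
have HE : forall x, Sel n (topo T) l x -> \sum_k qprob T x k * Yl l x k = 0.
  move=> x sx.
  rewrite (eq_bigr (fun k => qprob T x k * (Xi (topo T) l x k)%:R - qprob T x k * pl l)); last first.
    by move=> k _; rewrite /Yl mulrBr.
  by rewrite sumrB HEm // -mulr_suml qp1 mul1r subrr.
have HE' : forall x, Sel n (topo T) l x -> \sum_k qprob T x k * (fun x k => - Yl l x k) x k = 0.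
  move=> x sx /=.
  rewrite (eq_bigr (fun k => - (qprob T x k * Yl l x k))); last by move=> k _; rewrite mulrN.
  by rewrite sumrN HE // oppr0.
have p13 : 1/3 <= pl l <= 1/2.
  rewrite /pl; apply/andP; split.
    by rewrite ler_pdivlMr ?mul1r; [|lra]; rewrite ler_pdivrMl; lra.
  by rewrite ler_pdivrMr; lra.
have HY : forall x k, `|Yl l x k| <= 1.
  move=> x k; rewrite /Yl; case: (Xi _ _ _ _) => /=; rewrite ler_norml; apply/andP; split; lra.
have HY' : forall x k, `|(fun x k => - Yl l x k) x k| <= 1 by move=> x k /=; rewrite normrN.
have c1 := @chernoff1 R (triple n) (fun x k => qprob T x k) qp0 qp1 (Sel n (topo T) l) (Yl l) HY HE t t0 t2.
have c2 := @chernoff1 R (triple n) (fun x k => qprob T x k) qp0 qp1 (Sel n (topo T) l) _ HY' HE' t t0 t2.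
apply: le_trans (_ : _ <= expR (- (#|Sel n (topo T) l|%:R * t ^+ 2 / 8)) *+ 2) _; last first.
  exact: twice_le.
rewrite mulr2n.
apply: le_trans (lerD c1 c2).
rewrite /Prob -big_split /=; apply: ler_sum => xo _.
rewrite -mulrDr; apply: ler_wpM2l; first by apply: prodr_ge0 => x _; exact: qp0.
rewrite /Bad.
set b1 := (_ <= \sum_(x | _) Yl l x _)%R; set b2 := (_ <= \sum_(x | _) - Yl l x _)%R.
by case: b1; case: b2 => /=; rewrite ?addr0 ?add0r ?ler0n ?lerDl ?ler01.
Qed.


Lemma main_bound : 0 < t -> t <= 1/6 ->
  1 - (size (rpath T))%:R * (2 * expR (- (n%:R / 12 * t ^+ 2 / 8))) <=
  Prob T (fun o : outcomes n => [forall l : 'I_(size (rpath T)), (l <= fidx n T)%N ==>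
      (`|Aest R n (topo T) o l - hv (nth T (rpath T) l)| <= 18 * t)]).
Proof.
move=> t0 t6.
have [qp0 qp1] := qprob_props w0pos lok edT.
set B := 2 * expR (- (n%:R / 12 * t ^+ 2 / 8)).
set E := fun o : outcomes n => [forall l : 'I_(size (rpath T)), _].
pose g (l : 'I_(size (rpath T))) := ((0 < l) && (l <= fidx n T))%N.
have pw : forall o, 1 - \sum_l (g l)%:R * (Bad l o)%:R <= (E o)%:R :> R.
  move=> o; case Eo: (E o).
    rewrite lerBlDr lerDl; apply: sumr_ge0 => l _; apply: mulr_ge0; exact: ler0n.
  move/negbT: Eo => /forallPn [l]; rewrite negb_imply => /andP [lf ncl].
  have l0 : (0 < l)%N.
    rewrite lt0n; apply/negP => /eqP l0; move: ncl; rewrite l0 /Aest /=.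
    rewrite (hv_const rdT) subrr normr0 mulr_ge0 //; lra.
  have bl : Bad l o.
    apply/negPn/negP => nb; move: ncl; rewrite (close l0 lf (ltn_ord l) t6 nb) //.
  rewrite subr_le0 (bigD1 l) //= /g l0 lf bl /= mulr1 lerDl.
  by apply: sumr_ge0 => i _; apply: mulr_ge0; exact: ler0n.
apply: (@le_trans _ _ (\sum_(o : outcomes n) wgt R (triple n) (fun x k => qprob T x k) o * (1 - \sum_l (g l)%:R * (Bad l o)%:R))).
  rewrite (eq_bigr (fun o => wgt R (triple n) (fun x k => qprob T x k) o - \sum_l (g l)%:R * (wgt R (triple n) (fun x k => qprob T x k) o * (Bad l o)%:R))); last first.
    move=> o _; rewrite mulrBr mulr1 mulr_sumr; congr (_ - _).
    by apply: eq_bigr => l _; rewrite mulrCA.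
  rewrite sumrB (wgt_total R (triple n) _ qp1) exchange_big /= lerD2l lerN2.
  rewrite (eq_bigr (fun l => (g l)%:R * Prob T (Bad l))); last first.
    by move=> l _; rewrite -mulr_sumr.
  apply: le_trans (_ : \sum_(l : 'I_(size (rpath T))) B <= _).
    apply: ler_sum => l _; rewrite /g; case: (0 < l)%N / idP => l0 /=; last first.
      by rewrite mul0r /B; apply: mulr_ge0 => //; exact: expR_ge0.
    case: (l <= fidx n T)%N / idP => lf /=; last first.
      by rewrite mul0r /B; apply: mulr_ge0 => //; exact: expR_ge0.
    rewrite mul1r; apply: (bad_prob l0 lf (ltn_ord l) t0); lra.
  by rewrite sumr_const card_ord mulr_natl.
apply: ler_sum => o _; apply: ler_wpM2l; last exact: pw.
exact: (wgt_ge0 R (triple n) _ qp0).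
Qed.

End Main.

Unset Implicit Arguments. Set Strict Implicit.


Theorem lemma6 (R : realType) :
  exists (tau C : R), 0 < C /\
  exists A : forall n : nat, btree -> outcomes n -> nat -> R,
  forall eps : R, 0 < eps ->
  exists N : nat, forall (n : nat) (T : wtree R),
    (N <= n)%N ->
    leaf_set_ok n T ->
    ordered T ->
    all (fun x => x == 1) (rootdists T) ->
    edges_ge T (tau * ln (n%:R : R) / Num.sqrt (n%:R)) ->
    1 - eps <=
      Prob T (fun o : outcomes n =>
        [forall l : 'I_(size (rpath T)),
          (l <= fidx n T)%N ==>
          (`| A n (topo T) o l - hv (nth T (rpath T) l) |
             <= C * Num.sqrt (ln (n%:R : R) / n%:R))]).
Proof.
exists 1, 252; split; first lra.
exists (fun n => Aest R n).
move=> eps eps0.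
pose M : R := (2 * 84 ^+ 2) ^+ 2 + 2 / eps + 2.
have M0 : 0 <= M.
  rewrite /M; apply: addr_ge0; last by [].
  apply: addr_ge0; first exact: sqr_ge0.
  by apply: divr_ge0 => //; exact: ltW.
exists (Num.Def.archi_bound M).
move=> n T hN lok ordT rdT edT.
have nM : M < n%:R.
  by apply: lt_le_trans (archi_boundP M0) _; rewrite ler_nat.
have hB : 0 < 2 / eps by apply: divr_gt0.
have n14 : (2 * 84 ^+ 2) ^+ 2 <= n%:R :> R.
  apply: le_trans (ltW nM); rewrite /M -addrA lerDl; apply: addr_ge0 => //; exact: ltW.
have [neps n2] : 2 / eps < n%:R /\ 2 < n%:R :> R.
  move: nM; rewrite /M; move: ((2 * 84 ^+ 2) ^+ 2 : R) (sqr_ge0 (2 * 84 ^+ 2 : R)) => K K0 nM'.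
  split; lra.
have n0 : 0 < n%:R :> R by lra.
have lnn : 0 < ln (n%:R : R) by apply: ln_gt0; lra.
have sq0 : 0 < Num.sqrt (n%:R : R) by rewrite sqrtr_gt0.
have ssq : Num.sqrt (n%:R : R) * Num.sqrt (n%:R) = n%:R by rewrite -expr2 sqr_sqrtr // ltW.
have s14 : 2 * 84 ^+ 2 <= Num.sqrt (n%:R : R).
  have := ler_wsqrtr n14; rewrite sqrtr_sqr ger0_norm //.
clear n14.
have lnsq : ln (n%:R : R) <= 2 * Num.sqrt n%:R by apply: ln_le_sqrt; lra.
set s := Num.sqrt (ln (n%:R : R) / n%:R).
have s2 : s ^+ 2 = ln (n%:R : R) / n%:R by rewrite sqr_sqrtr // divr_ge0 // ltW.
have s0 : 0 < s by rewrite sqrtr_gt0 divr_gt0.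
have key : 84 ^+ 2 * ln (n%:R : R) <= n%:R.
  have h1 : 84 ^+ 2 * ln (n%:R:R) <= 84 ^+ 2 * (2 * Num.sqrt n%:R).
    by rewrite ler_pM2l // exprn_gt0.
  apply: le_trans h1 _; rewrite -[X in _ <= X]ssq mulrA ler_pM2r //.
  by rewrite mulrC.
have e84 : (84 ^+ 2 : R) = 36 * 196 by rewrite -natrX -natrM.
have s2b : s ^+ 2 * 84 ^+ 2 <= 1.
  by rewrite s2 mulrAC ler_pdivrMr // mul1r mulrC.
rewrite e84 in s2b.
set t := 14 * s.
have t6 : t <= 1/6 by rewrite /t; nra.
have t0 : 0 < t by rewrite /t; lra.
have -> : 252 * s = 18 * t by rewrite /t; ring.
case: T lok ordT rdT edT => [a|wl L wr Rt] lok ordT rdT edT.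
  have := perm_size lok; rewrite size_iota /= => en.
  by move: n2; rewrite -en; lra.
have w0pos : 0 < 1 * ln (n%:R : R) / Num.sqrt (n%:R) by rewrite mul1r divr_gt0.
have MB := main_bound lok ordT rdT w0pos edT t0 t6.
apply: le_trans MB.
rewrite lerD2l lerN2.
have hsz : (size (rpath (WNode wl L wr Rt)))%:R <= n%:R :> R.
  by rewrite ler_nat; apply: size_rpath_n lok.
have hx : 2 * ln (n%:R : R) <= n%:R / 12 * t ^+ 2 / 8.
  have -> : n%:R / 12 * t ^+ 2 / 8 = 196 / 96 * (n%:R * s ^+ 2) by rewrite /t; field.
  have e : n%:R * (ln (n%:R : R) / n%:R) = ln (n%:R : R) by field; rewrite gt_eqF.
  rewrite s2 e; lra.
have he : expR (- (n%:R / 12 * t ^+ 2 / 8)) <= (n%:R ^+ 2)^-1 :> R.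
  have -> : (n%:R ^+ 2)^-1 = expR (- (2%:R * ln (n%:R : R))) :> R.
    by rewrite expRN expRM_natl lnK // posrE.
  by rewrite ler_expR lerN2.
have he0 : 0 <= expR (- (n%:R / 12 * t ^+ 2 / 8)) :> R by exact: expR_ge0.
have : (size (rpath (WNode wl L wr Rt)))%:R * (2 * expR (- (n%:R / 12 * t ^+ 2 / 8))) <= n%:R * (2 * (n%:R ^+ 2)^-1) :> R.
  apply: ler_pM; [exact: ler0n | by apply: mulr_ge0 | exact: hsz | by rewrite ler_pM2l].
have -> : n%:R * (2 * (n%:R ^+ 2)^-1) = 2 / n%:R :> R by field; rewrite gt_eqF.
move=> h; apply: le_trans h _.
rewrite ler_pdivrMr // mulrC -ler_pdivrMr //; exact: ltW.
Qed.
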